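(* Let $n\ge1$, let $a=x_0<x_1<\dots<x_n=b$ be a partition of $[a,b]$, and let $Z$ be the $(n+1)\times(n+1)$ matrix with entries $Z_{jk}=l_k'(x_j)$, where $l_k$ are the Lagrange basis polynomials of the partition. Let $P(z)=a_kz^k+a_{k+1}z^{k+1}+\dots+a_mz^m$ be a real polynomial with $0\le k\le n$, $k\le m$ and $a_k\ne0$. Then $\operatorname{rank} Z=n$, $Z^{n+1}=0$, and $\operatorname{rank} P(Z)=\operatorname{rank} Z^k=n+1-k$.
   Context: $l_k(x)=\prod_{m\ne k}(x-x_m)/\prod_{m\ne k}(x_k-x_m)$ for $k=0,\dots,n$. The matrix $Z$ is the finite dimensional (Lie-algebraic) representation of $d/dx$, so $P(Z)$ represents the operator $a_k\frac{d^k}{dx^k}+\dots+a_m\frac{d^m}{dx^m}$. *)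

(* Defs.v *)
From HB Require Import structures.
From mathcomp Require Import all_boot all_order all_algebra.
Set Implicit Arguments. Unset Strict Implicit. Unset Printing Implicit Defensive.
Import Order.TTheory GRing.Theory Num.Theory.
Local Open Scope ring_scope.

Definition lagrange_basis (R : fieldType) (n : nat) (x : 'I_n.+1 -> R)
  (k : 'I_n.+1) : {poly R} :=
  (\prod_(m < n.+1 | m != k) (x k - x m))^-1 *:
    \prod_(m < n.+1 | m != k) ('X - (x m)%:P).

Definition diff_matrix (R : fieldType) (n : nat) (x : 'I_n.+1 -> R)
  : 'M[R]_n.+1 :=
  \matrix_(j < n.+1, k < n.+1) ((lagrange_basis x k)^`()).[x j].

(* Main.v *)
Require Import Defs.
From HB Require Import structures.
From mathcomp Require Import all_boot all_order all_algebra.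
From mathcomp Require Import fingroup perm.
Set Implicit Arguments. Unset Strict Implicit. Unset Printing Implicit Defensive.
Import Order.TTheory GRing.Theory Num.Theory.
Local Open Scope ring_scope.

Lemma mxrank_unitl (R : fieldType) m n (A : 'M[R]_m) (B : 'M[R]_(m, n)) :
  A \in unitmx -> \rank (A *m B) = \rank B.
Proof.
move=> uA; rewrite -mxrank_tr trmx_mul mxrankMfree ?mxrank_tr //.
by rewrite row_free_unit unitmx_tr.
Qed.

Lemma poly_Xn_split (R : nzRingType) (p : {poly R}) k :
  (forall i, (i < k)%N -> p`_i = 0) -> p = 'X^k * Poly (drop k p).
Proof.
move=> hp; apply/polyP => i; rewrite coefXnM.
case: ifP => [/hp //|/negbT]; rewrite -leqNgt => ki.
by rewrite coef_Poly nth_drop subnKC.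
Qed.

Lemma unit_nil (R : fieldType) n (N : 'M[R]_n.+1) (c : R) m :
  c != 0 -> N ^+ m = 0 -> (c%:M + N) \in unitmx.
Proof.
move=> c0 hN.
set y := - (c^-1 *: N).
have hy : y ^+ m = 0 by rewrite /y exprNn exprZn hN scaler0 mulr0.
have e := subrX1 y m; rewrite hy sub0r in e.
have hU : c%:M + N = - c *: (y - 1).
  rewrite /y scalerBr scalerN scaleNr opprK scalerA mulfV // scale1r.
  by rewrite scaleNr opprK -scalemx1 addrC.
apply: (proj1 (@mulmx1_unit _ _ _ (c^-1 *: \sum_(i < m) y ^+ i) _)).
rewrite mulmxE hU -scalerAr -scalerAl -e scalerA mulrN mulVf // scaleN1r opprK.
by [].
Qed.

Section S2.
Variable (R : realFieldType) (n k : nat).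
Hypothesis (kn : (k <= n.+1)%N).

Definition EE2 : 'M[R]_n.+1 := \matrix_(l, i) ((i == (l + k)%N :> nat)%:R *+ i^_k).

Lemma tinj : injective (fun l : 'I_n.+1 => Ordinal (@ltn_pmod (l + k) n.+1 (ltn0Sn n))).
Proof.
move=> a b /(congr1 val) /= /eqP; rewrite eqn_modDr !modn_small // => /eqP e.
exact: val_inj.
Qed.

Lemma rankEE : \rank EE2 = (n.+1 - k)%N.
Proof.
set r := (n.+1 - k)%N.
set t := perm tinj.
set c : 'rV[R]_n.+1 := \row_l (((l + k)%N ^_ k)%:R).
have -> : EE2 = diag_mx c *m (pid_mx r *m perm_mx t).
  apply/matrixP => l i; rewrite mul_diag_mx !mxE.
  have [lr|rl] := ltnP l r.
    rewrite (bigD1 l) //= big1 ?addr0; last first.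
      move=> m ml; rewrite !mxE (_ : (l == m :> nat) = false) ?mul0r //; by apply/negbTE; rewrite ?val_eqE eq_sym.
    rewrite !mxE eqxx lr mul1r permE /=.
    have lk : (l + k < n.+1)%N by move: lr; rewrite /r ltn_subRL addnC.
    have -> : (Ordinal (ltn_pmod (l + k) (ltn0Sn n)) == i) = (i == (l + k)%N :> nat).
      by rewrite eq_sym -val_eqE /= modn_small.
    by case: eqP => [->|_]; rewrite ?mulr1 ?mulr0 ?mulr1n ?mulr0n ?mul0rn.
  rewrite big1 ?mulr0; last by move=> m _; rewrite !mxE ltnNge rl andbF mul0r.
  have : (i != (l + k)%N :> nat).
    rewrite neq_ltn (leq_trans (ltn_ord i)) //.
    by move: rl; rewrite /r leq_subLR addnC.
  by move/negPf => ->; rewrite mul0rn.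
rewrite mxrank_unitl; last first.
  rewrite unitmxE det_diag unitfE; apply/prodf_neq0 => i _.
  by rewrite !mxE pnatr_eq0 -lt0n ffact_gt0 leq_addl.
rewrite mxrankMfree ?row_free_unit ?unitmx_perm //.
by rewrite rank_pid_mx // leq_subr.
Qed.
End S2.
Section S.
Variable (R : realFieldType) (n : nat) (x : 'I_n.+1 -> R).
Hypothesis hx : injective x.

Lemma lag_eval k j : (lagrange_basis x k).[x j] = (j == k)%:R.
Proof.
rewrite /lagrange_basis hornerZ horner_prod.
have [->|njk] := eqVneq j k.
  under [X in _ * X]eq_bigr do rewrite !hornerE.
  rewrite mulVf //; apply/prodf_neq0 => m mk; rewrite subr_eq0; apply/eqP => /hx e.
  by rewrite e eqxx in mk.
rewrite [X in _ * X](bigD1 j) //= !hornerE subrr ?mul0r ?mulr0 //.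
by rewrite /= !(mulr0, mul0r).
Qed.

Lemma lag_size k : (size (lagrange_basis x k) <= n.+1)%N.
Proof.
rewrite /lagrange_basis (leq_trans (size_scale_leq _ _)) //.
rewrite size_prod; last by move=> i _; rewrite polyXsubC_eq0.
rewrite (eq_bigr (fun _ => 2%N)); last by move=> i _; rewrite size_XsubC.
rewrite sum_nat_const.
set c := #|_|.
have -> : ((c * 2).+1 - c = c.+1)%N by rewrite -addn1 muln2 -addnn -addnA addKn addn1.
have : (c <= n)%N.
  rewrite /c -ltnS -[X in (_ < X)%N](card_ord n.+1).
  apply: proper_card; apply/properP; split; first by apply/subsetP.
  by exists k => //=; rewrite -topredE /= eqxx.
done.
Qed.

Definition vv (p : {poly R}) : 'cV[R]_n.+1 := \col_j p.[x j].

Lemma interp (p : {poly R}) : (size p <= n.+1)%N ->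
  p = \sum_k p.[x k] *: lagrange_basis x k.
Proof.
move=> sp; apply/eqP; rewrite -subr_eq0; apply/eqP.
set q := _ - _.
apply: contraTeq isT => qn0.
have := @max_poly_roots _ q [seq x i | i <- enum 'I_n.+1] qn0.
rewrite size_map size_enum_ord.
have -> : all (root q) [seq x i | i <- enum 'I_n.+1].
  apply/allP => y /mapP [j _ ->]; rewrite /root /q hornerD hornerN horner_sum.
  rewrite (bigD1 j) //= big1 ?addr0; first by rewrite hornerZ lag_eval eqxx mulr1 subrr.
  by move=> i ij; rewrite hornerZ lag_eval eq_sym (negPf ij) mulr0.
rewrite map_inj_uniq ?enum_uniq // => /(_ isT isT).
rewrite ltnNge.
have -> : (size q <= n.+1)%N; last by [].
rewrite /q (leq_trans (size_polyD _ _)) // geq_max sp size_polyN.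
apply: (big_ind (fun r : {poly R} => size r <= n.+1)%N) => //.
  by rewrite size_poly0.
  by move=> a b ha hb; rewrite (leq_trans (size_polyD _ _)) // geq_max ha hb.
by move=> i _; rewrite (leq_trans (size_scale_leq _ _)) // lag_size.
Qed.

Lemma size_deriv_le (p : {poly R}) : (size p^`() <= size p)%N.
Proof.
have [->|pn0] := eqVneq p 0; first by rewrite deriv0.
exact/ltnW/lt_size_deriv.
Qed.

Lemma Zv (p : {poly R}) : (size p <= n.+1)%N -> diff_matrix x *m vv p = vv p^`().
Proof.
move=> sp; apply/matrixP => j i; rewrite !mxE.
rewrite [in RHS](interp sp) linear_sum horner_sum.
apply: eq_bigr => l _; rewrite !mxE [in RHS]linearZ /= [in RHS]hornerZ mulrC.
by [].
Qed.

Lemma Zkv k (p : {poly R}) : (size p <= n.+1)%N -> diff_matrix x ^+ k *m vv p = vv p^`(k).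
Proof.
elim: k p => [|k IH] p sp; first by rewrite expr0 mul1mx derivn0.
rewrite exprSr -mulmxE -mulmxA Zv // IH ?derivSn //.
exact: leq_trans (size_deriv_le _) sp.
Qed.

Definition MM : 'M[R]_n.+1 := (Vandermonde n.+1 (\row_i x i))^T.

Lemma MM_unit : MM \in unitmx.
Proof.
rewrite unitmx_tr unitmxE det_Vandermonde unitfE; apply/prodf_neq0 => i _.
apply/prodf_neq0 => j ij; rewrite !mxE subr_eq0; apply/eqP => /hx e.
by rewrite e ltnn in ij.
Qed.

Lemma MMcol (A : 'M[R]_n.+1) j i : (A *m MM) j i = (A *m vv 'X^i) j 0.
Proof. by rewrite !mxE; apply: eq_bigr => l _; rewrite !mxE hornerXn. Qed.

Definition EE k : 'M[R]_n.+1 := \matrix_(l, i) ((i == (l + k)%N :> nat)%:R *+ i^_k).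

Lemma ZkM k : diff_matrix x ^+ k *m MM = MM *m EE k.
Proof.
apply/matrixP => j i; rewrite MMcol Zkv ?size_polyXn //.
rewrite derivnXn !mxE hornerMn hornerXn.
have [ki|ik] := leqP k i; last first.
  rewrite ffact_small // mulr0n big1 // => l _; rewrite !mxE ffact_small //.
  by rewrite !mulr0n mulr0.
have lt : (i - k < n.+1)%N by rewrite (leq_ltn_trans (leq_subr _ _)).
rewrite (bigD1 (Ordinal lt)) //= big1 ?addr0.
  by rewrite !mxE /= subnK // eqxx mulr1n mulrnAr mulr1.
move=> l nl; rewrite !mxE; case: eqP => [e|_]; last by rewrite !mul0rn mulr0.
by case/eqP: nl; apply/val_inj => /=; rewrite e addnK.
Qed.

End S.

Theorem theorem3 (R : realFieldType) (n : nat) (a b : R)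
  (x : 'I_n.+1 -> R) (k : nat) (P : {poly R}) :
  (1 <= n)%N ->
  x ord0 = a -> x ord_max = b ->
  (forall i j : 'I_n.+1, (i < j)%N -> x i < x j) ->
  (k <= n)%N ->
  (forall i, (i < k)%N -> P`_i = 0) ->
  P`_k != 0 ->
  let Z := diff_matrix x in
  \rank Z = n /\ Z ^+ n.+1 = 0 /\
  \rank (horner_mx Z P) = \rank (Z ^+ k) /\ \rank (Z ^+ k) = (n.+1 - k)%N.
Proof.
move=> n1 _ _ hinc kn hP hPk Z.
have hx : injective x.
  move=> i j e; apply/val_inj/eqP; apply: contraT; rewrite neq_ltn.
  by case/orP => /hinc; rewrite e ltxx.
have rk : forall j, (j <= n.+1)%N -> \rank (Z ^+ j) = (n.+1 - j)%N.
  move=> j jn; rewrite -(mxrankMfree _ (B := MM x)); last by rewrite row_free_unit MM_unit.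
  rewrite /Z ZkM // mxrank_unitl ?MM_unit //.
  rewrite -(rankEE R n j); congr (\rank _); apply/matrixP => l i; rewrite !mxE.
have Zn : Z ^+ n.+1 = 0 by apply/eqP; rewrite -mxrank_eq0 rk // subnn.
have rkk : \rank (Z ^+ k) = (n.+1 - k)%N by rewrite rk // ltnW.
split; first by rewrite -[Z]expr1 rk // subn1.
split => //; split => //.
set Q := Poly (drop k P).
set c := Q`_0.
have c0 : c != 0 by rewrite /c coef_Poly nth_drop addn0.
have hS : Q - c%:P = 'X^1 * Poly (drop 1 (Q - c%:P)).
  by apply: poly_Xn_split => -[|//] _; rewrite coefB coefC subrr.
have hS' : Q = c%:P + 'X * Poly (drop 1 (Q - c%:P)).
  by rewrite -[X in _ + X * _]expr1 -hS addrC subrK.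
rewrite (poly_Xn_split hP) rmorphM rmorphXn /= horner_mx_X -mulmxE mxrankMfree //.
rewrite row_free_unit -/Q hS' rmorphD /= horner_mx_C.
apply: (@unit_nil _ _ _ _ n.+1 c0).
by rewrite -rmorphXn exprMn rmorphM rmorphXn /= horner_mx_X Zn mul0r.
Qed.
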